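(* The topological stable rank of the topological ring $s'(\mathbb{Z}^d)$ (for any $d\ge1$), equipped with its weak-$*$ topology as the dual of $s(\mathbb{Z}^d)$, is $1$; that is, the set of invertible elements of $s'(\mathbb{Z}^d)$ is dense in $s'(\mathbb{Z}^d)$.
   Context: For $\mathbf{n}\in\mathbb{Z}^d$, $\|\mathbf{n}\|_1$ denotes the $1$-norm. $s'(\mathbb{Z}^d)$ is the set of all maps $\mathbf{a}:\mathbb{Z}^d\to\mathbb{C}$ for which there exist $M>0$ and $k\in\mathbb{N}$ with $|\mathbf{a}(\mathbf{n})|\le M(1+\|\mathbf{n}\|_1)^k$ for all $\mathbf{n}$; it is a commutative unital ring under pointwise operations. $s(\mathbb{Z}^d)$ is the space of maps $\mathbf{b}:\mathbb{Z}^d\to\mathbb{C}$ with $\sup_{\mathbf{n}}(1+\|\mathbf{n}\|_1)^k|\mathbf{b}(\mathbf{n})|<\infty$ for every $k\in\mathbb{N}$. The pairing $\langle \mathbf{a},\mathbf{b}\rangle=\sum_{\mathbf{n}\in\mathbb{Z}^d}\mathbf{a}(\mathbf{n})\mathbf{b}(\mathbf{n})$ for $\mathbf{a}\in s'(\mathbb{Z}^d)$, $\mathbf{b}\in s(\mathbb{Z}^d)$ defines the weak-$*$ topology on $s'(\mathbb{Z}^d)$: a net $(\mathbf{a}_i)$ converges to $\mathbf{a}$ iff $\langle\mathbf{a}_i,\mathbf{b}\rangle\to\langle\mathbf{a},\mathbf{b}\rangle$ for every $\mathbf{b}\in s(\mathbb{Z}^d)$. For a commutative unital topological ring $R$, $U_N(R)$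 is the set of $(a_1,\dots,a_N)\in R^N$ for which there exist $b_i\in R$ with $\sum b_ia_i=1$, and the topological stable rank of $R$ is the least integer $N\ge1$ such that $U_N(R)$ is dense in $R^N$ (product topology), or $\infty$ if there is none. *)

(* Defs.v *)
From Stdlib Require Import Reals ZArith List Vector.
From Coquelicot Require Import Coquelicot.
Set Implicit Arguments.

Definition Zd (d : nat) : Type := Vector.t Z d.

Definition norm1 {d : nat} (n : Zd d) : Z :=
  Vector.fold_right (fun z acc => (Z.abs z + acc)%Z) n 0%Z.

Definition in_sprime {d : nat} (a : Zd d -> C) : Prop :=
  exists (M : R) (k : nat), (0 < M)%R /\
    forall n : Zd d, (Cmod (a n) <= M * (1 + IZR (norm1 n)) ^ k)%R.

Definition in_s {d : nat} (b : Zd d -> C) : Prop :=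
  forall k : nat, exists B : R,
    forall n : Zd d, ((1 + IZR (norm1 n)) ^ k * Cmod (b n) <= B)%R.

Definition zrange (K : nat) : list Z :=
  List.map (fun j => (Z.of_nat j - Z.of_nat K)%Z) (List.seq 0 (2 * K + 1)).

Fixpoint box (K : nat) (d : nat) : list (Zd d) :=
  match d with
  | O => List.cons (Vector.nil Z) List.nil
  | S d' => List.flat_map (fun z => List.map (fun v => Vector.cons Z z d' v) (box K d'))
                          (zrange K)
  end.

Definition box_sum {d : nat} (a b : Zd d -> C) (K : nat) : C :=
  List.fold_right Cplus (RtoC 0) (List.map (fun n => Cmult (a n) (b n)) (box K d)).

(* The pairing <a,b> = sum_{n in Z^d} a(n) b(n); for a in s', b in s the series
   converges absolutely, so it equals the limit of the box partial sums. *)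
Definition pairing {d : nat} (a b : Zd d -> C) : C :=
  (real (Lim_seq (fun K => fst (box_sum a b K))),
   real (Lim_seq (fun K => snd (box_sum a b K)))).

Definition in_U {d : nat} (N : nat) (a : nat -> Zd d -> C) : Prop :=
  (forall i, (i < N)%nat -> in_sprime (a i)) /\
  exists b : nat -> Zd d -> C,
    (forall i, (i < N)%nat -> in_sprime (b i)) /\
    forall n : Zd d,
      List.fold_right Cplus (RtoC 0)
        (List.map (fun i => Cmult (b i n) (a i n)) (List.seq 0 N)) = RtoC 1.

(* Density of U_N in (s'(Z^d))^N for the product of the weak-* topologies:
   every basic neighbourhood { u | |<u_i,b> - <a_i,b>| < eps, i < N, b in bs }
   (bs a finite family in s(Z^d), eps > 0) of every a in (s')^N meets U_N. *)
Definition U_dense (d N : nat) : Prop :=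
  forall a : nat -> Zd d -> C,
    (forall i, (i < N)%nat -> in_sprime (a i)) ->
    forall (bs : list (Zd d -> C)) (eps : R),
      (forall b, List.In b bs -> in_s b) -> (0 < eps)%R ->
      exists u : nat -> Zd d -> C,
        in_U N u /\
        forall i b, (i < N)%nat -> List.In b bs ->
          (Cmod (Cminus (pairing (u i) b) (pairing (a i) b)) < eps)%R.

(* tsr(s'(Z^d)) = r, with r = Some N for a finite value N and None for infinity:
   the least N >= 1 such that U_N is dense in (s')^N. *)
Definition is_top_stable_rank (d : nat) (r : option nat) : Prop :=
  match r with
  | Some N => (1 <= N)%nat /\ U_dense d N /\
              forall M, (1 <= M)%nat -> (M < N)%nat -> ~ U_dense d M
  | None => forall N, (1 <= N)%nat -> ~ U_dense d N
  end.

(* Main.v *)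
Require Import Defs.
From Stdlib Require Import Reals ZArith List Vector Lra Lia.
From Coquelicot Require Import Coquelicot.
Open Scope R_scope.
Lemma is_LimSup_shift (u : nat -> R) (l : Rbar) (c : R) :
  is_LimSup_seq u l -> is_LimSup_seq (fun n => u n + c) (Rbar_plus l c).
Proof.
  destruct l as [l| |]; simpl; intros H.
  - intros eps. destruct (H eps) as [H1 [N H2]]. split.
    + intros N0. destruct (H1 N0) as [n [Hn Hn']]. exists n. split; auto. lra.
    + exists N. intros n Hn. specialize (H2 n Hn). lra.
  - intros M N. destruct (H (M - c) N) as [n [Hn Hn']]. exists n. split; auto. lra.
  - intros M. destruct (H (M - c)) as [N HN]. exists N. intros n Hn. specialize (HN n Hn). lra.
Qed.

Lemma LimSup_shift (u : nat -> R) (c : R) :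
  LimSup_seq (fun n => u n + c) = Rbar_plus (LimSup_seq u) c.
Proof.
  apply is_LimSup_seq_unique. destruct (ex_LimSup_seq u) as [l Hl].
  rewrite (is_LimSup_seq_unique _ _ Hl). now apply is_LimSup_shift.
Qed.

Definition rclose (e : R) (a b : Rbar) : Prop :=
  match a, b with
  | Finite x, Finite y => Rabs (y - x) <= e
  | p_infty, p_infty => True
  | m_infty, m_infty => True
  | _, _ => False
  end.

Lemma LimSup_close (x y : nat -> R) (e : R) :
  (forall n, Rabs (y n) <= e) ->
  rclose e (LimSup_seq x) (LimSup_seq (fun n => x n + y n)).
Proof.
  intros Hy.
  assert (H1 : Rbar_le (LimSup_seq (fun n => x n + - e)) (LimSup_seq (fun n => x n + y n))).
  { apply LimSup_le. exists 0%nat. intros n _. specialize (Hy n).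
    apply Rabs_le_between in Hy. lra. }
  assert (H2 : Rbar_le (LimSup_seq (fun n => x n + y n)) (LimSup_seq (fun n => x n + e))).
  { apply LimSup_le. exists 0%nat. intros n _. specialize (Hy n).
    apply Rabs_le_between in Hy. lra. }
  rewrite !LimSup_shift in H1, H2.
  destruct (LimSup_seq x) as [a| |]; destruct (LimSup_seq (fun n => x n + y n)) as [b| |];
    simpl in *; auto.
  apply Rabs_le. lra.
Qed.

Lemma rclose_opp e a b : rclose e a b -> rclose e (Rbar_opp a) (Rbar_opp b).
Proof.
  destruct a, b; simpl; auto. intros H. rewrite <- Rabs_Ropp. 
  replace (- (- r0 - - r)) with (r0 - r) by ring. exact H.
Qed.

Lemma LimInf_close (x y : nat -> R) (e : R) :
  (forall n, Rabs (y n) <= e) ->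
  rclose e (LimInf_seq x) (LimInf_seq (fun n => x n + y n)).
Proof.
  intros Hy.
  assert (E1 : LimInf_seq x = Rbar_opp (LimSup_seq (fun n => - x n))).
  { rewrite LimSup_seq_opp. now rewrite Rbar_opp_involutive. }
  assert (E2 : LimInf_seq (fun n => x n + y n) =
               Rbar_opp (LimSup_seq (fun n => - x n + - y n))).
  { replace (fun n => - x n + - y n) with (fun n => - (x n + y n)).
    - rewrite LimSup_seq_opp. now rewrite Rbar_opp_involutive.
    - apply FunctionalExtensionality.functional_extensionality. intros; ring. }
  rewrite E1, E2. apply rclose_opp. apply LimSup_close.
  intros n. rewrite Rabs_Ropp. auto.
Qed.

Lemma Lim_close (x y : nat -> R) (e : R) :
  (forall n, Rabs (y n) <= e) ->
  Rabs (real (Lim_seq (fun n => x n + y n)) - real (Lim_seq x)) <= e.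
Proof.
  intros Hy.
  assert (He : 0 <= e) by (specialize (Hy 0%nat); pose proof (Rabs_pos (y 0%nat)); lra).
  pose proof (LimSup_close x y e Hy) as H1.
  pose proof (LimInf_close x y e Hy) as H2.
  unfold Lim_seq.
  destruct (LimSup_seq x) as [a| |]; destruct (LimSup_seq (fun n => x n + y n)) as [b| |];
  destruct (LimInf_seq x) as [c| |]; destruct (LimInf_seq (fun n => x n + y n)) as [d| |];
    simpl in *; try contradiction; rewrite ?Rminus_0_r, ?Rminus_diag, ?Rabs_R0; auto.
  apply Rabs_le_between in H1. apply Rabs_le_between in H2.
  apply Rabs_le_between. lra.
Qed.

Definition g (r : R) : R := / ((1 + Rabs r) * (2 + Rabs r)).
Definition phi (r : R) : R := r / (1 + Rabs r).

Lemma g_pos r : 0 < g r.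
Proof. unfold g. pose proof (Rabs_pos r). apply Rinv_0_lt_compat. nra. Qed.

Lemma g_le r : g r <= 1/2.
Proof. unfold g. pose proof (Rabs_pos r). unfold Rdiv. rewrite Rmult_1_l.
  apply Rinv_le_contravar; nra. Qed.

Lemma g_tele (z : Z) : g (IZR z) <= phi (IZR (z + 1)) - phi (IZR z).
Proof.
  unfold g, phi. rewrite plus_IZR.
  destruct (Z_le_gt_dec 0 z) as [Hz|Hz].
  - apply IZR_le in Hz. rewrite !Rabs_pos_eq by lra.
    apply Req_le. field. lra.
  - assert (Hz' : IZR z <= -1) by (apply IZR_le; lia).
    rewrite Rabs_left by lra.
    destruct (Req_dec (IZR z) (-1)) as [E|E].
    + rewrite E. replace (-1 + 1) with 0 by ring. rewrite Rabs_R0.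
      apply Rle_trans with (/ 6); [right; field|]. apply Rle_trans with (1 / 2); [lra| right; field].
    + rewrite Rabs_left by lra. set (t := IZR z) in *.
      assert (t < -1) by lra.
      apply Rle_trans with (/ ((- t) * (1 - t))).
      * apply Rinv_le_contravar; nra.
      * apply Req_le. field. repeat split; lra.
Qed.

Lemma phi_bound r : Rabs (phi r) <= 1.
Proof. unfold phi. pose proof (Rabs_pos r). rewrite Rabs_div by lra.
  rewrite (Rabs_pos_eq (1 + Rabs r)) by lra.
  apply Rle_trans with ((1 + Rabs r) / (1 + Rabs r)).
  - unfold Rdiv. apply Rmult_le_compat_r. left; apply Rinv_0_lt_compat; lra. lra.
  - right; field; lra. Qed.

Definition rsum {A} (f : A -> R) (l : list A) : R := List.fold_right Rplus 0 (List.map f l).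

Lemma rsum_le {A} (f h : A -> R) l : (forall x, f x <= h x) -> rsum f l <= rsum h l.
Proof. intros H; induction l; unfold rsum in *; simpl; [lra|]. specialize (H a). lra. Qed.

Lemma rsum_app {A} (f : A -> R) l1 l2 : rsum f (l1 ++ l2) = rsum f l1 + rsum f l2.
Proof. induction l1; unfold rsum in *; simpl; [ring|]. rewrite IHl1. ring. Qed.

Lemma rsum_scal {A} (f : A -> R) c l : rsum (fun x => c * f x) l = c * rsum f l.
Proof. induction l; unfold rsum in *; simpl; [ring|]. rewrite IHl. ring. Qed.

Lemma rsum_map {A B} (f : B -> R) (h : A -> B) l : rsum f (List.map h l) = rsum (fun x => f (h x)) l.
Proof. unfold rsum. now rewrite List.map_map. Qed.

Lemma rsum_flat {A B} (f : B -> R) (h : A -> list B) l :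
  rsum f (List.flat_map h l) = rsum (fun z => rsum f (h z)) l.
Proof. induction l; simpl; [reflexivity|]. rewrite rsum_app, IHl. reflexivity. Qed.

Lemma rsum_nonneg {A} (f : A -> R) l : (forall x, 0 <= f x) -> 0 <= rsum f l.
Proof. intros H; induction l; unfold rsum in *; simpl; [lra|]. specialize (H a). lra. Qed.

Lemma tele_seq (psi : nat -> R) n m :
  rsum (fun j => psi (S j) - psi j) (List.seq m n) = psi (m + n)%nat - psi m.
Proof.
  revert m; induction n; intros m; simpl.
  - rewrite Nat.add_0_r. unfold rsum; simpl; ring.
  - unfold rsum in *; simpl. rewrite IHn. replace (S m + n)%nat with (m + S n)%nat by lia. ring.
Qed.

Lemma zrange_sum K : rsum (fun z => g (IZR z)) (zrange K) <= 2.
Proof.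
  unfold zrange. rewrite rsum_map.
  set (psi := fun j : nat => phi (IZR (Z.of_nat j - Z.of_nat K))).
  apply Rle_trans with (rsum (fun j => psi (S j) - psi j) (List.seq 0 (2 * K + 1))).
  - apply rsum_le. intros j. unfold psi. rewrite Nat2Z.inj_succ.
    replace (Z.succ (Z.of_nat j) - Z.of_nat K)%Z with ((Z.of_nat j - Z.of_nat K) + 1)%Z by lia.
    apply g_tele.
  - rewrite tele_seq. pose proof (phi_bound (IZR (Z.of_nat (0 + (2 * K + 1)) - Z.of_nat K))).
    pose proof (phi_bound (IZR (Z.of_nat 0 - Z.of_nat K))). unfold psi.
    apply Rabs_le_between in H. apply Rabs_le_between in H0. lra.
Qed.

Definition W {d : nat} (n : Zd d) : R := Vector.fold_right (fun z acc => g (IZR z) * acc) n 1.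

Lemma W_cons {d} z (v : Zd d) : W (Vector.cons Z z d v) = g (IZR z) * W v.
Proof. reflexivity. Qed.

Lemma W_pos {d} (n : Zd d) : 0 < W n.
Proof. induction n as [|h d0 n IHn]; [unfold W; simpl; lra|]. rewrite W_cons. pose proof (g_pos (IZR h)). nra. Qed.

Lemma W_le1 {d} (n : Zd d) : W n <= 1.
Proof. induction n as [|h d0 n IHn]; [unfold W; simpl; lra|]. rewrite W_cons.
  pose proof (g_pos (IZR h)). pose proof (g_le (IZR h)). pose proof (W_pos n). nra. Qed.

Lemma norm1_cons {d} z (v : Zd d) : norm1 (Vector.cons Z z d v) = (Z.abs z + norm1 v)%Z.
Proof. reflexivity. Qed.

Lemma norm1_nonneg {d} (n : Zd d) : 0 <= IZR (norm1 n).
Proof. induction n as [|h d0 n IHn]; [unfold norm1; simpl; lra|]. rewrite norm1_cons, plus_IZR, abs_IZR.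
  pose proof (Rabs_pos (IZR h)). lra. Qed.

Lemma W_lower {d} (n : Zd d) : 1 <= 2 ^ d * (1 + IZR (norm1 n)) ^ (2 * d) * W n.
Proof.
  induction n as [|h d' v IH]; [unfold W; simpl; lra|].
  rewrite W_cons, norm1_cons, plus_IZR, abs_IZR.
  set (a := Rabs (IZR h)). set (N := IZR (norm1 v)).
  assert (Ha : 0 <= a) by apply Rabs_pos.
  assert (HN : 0 <= N) by apply norm1_nonneg.
  replace (2 * S d')%nat with (S (S (2 * d'))) by lia.
  simpl pow.
  assert (Hg : 1 <= 2 * (1 + (a + N)) * (1 + (a + N)) * g (IZR h)).
  { unfold g. fold a. apply Rmult_le_reg_r with ((1 + a) * (2 + a)); [nra|].
    rewrite Rmult_assoc, Rinv_l by nra. nra. }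
  assert (Hp : (1 + N) ^ (2 * d') <= (1 + (a + N)) ^ (2 * d')).
  { apply pow_incr. lra. }
  pose proof (W_pos v). pose proof (pow_le (1 + N) (2 * d') ltac:(lra)).
  pose proof (pow_le 2 d' ltac:(lra)). pose proof (g_pos (IZR h)).
  assert (1 <= 2 ^ d' * (1 + (a + N)) ^ (2 * d') * W v).
  { apply Rle_trans with (1 := IH). apply Rmult_le_compat_r; [lra|].
    fold N. apply Rmult_le_compat_l; lra. }
  pose proof (pow_le (1 + (a + N)) (2 * d') ltac:(lra)).
  set (P := 2 ^ d' * (1 + (a + N)) ^ (2 * d') * W v) in *.
  set (Q := 2 * (1 + (a + N)) * (1 + (a + N)) * g (IZR h)) in *.
  replace (d' + (d' + 0))%nat with (2 * d')%nat by lia.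
  replace (2 * 2 ^ d' * ((1 + (a + N)) * ((1 + (a + N)) * (1 + (a + N)) ^ (2 * d'))) *
    (g (IZR h) * W v)) with (Q * P) by (unfold P, Q; ring).
  nra.
Qed.

Lemma box_W K d : rsum W (box K d) <= 2 ^ d.
Proof.
  induction d; simpl.
  - unfold rsum, W; simpl; lra.
  - rewrite rsum_flat.
    apply Rle_trans with (rsum (fun z => g (IZR z) * 2 ^ d) (zrange K)).
    + apply rsum_le. intros z. rewrite rsum_map.
      change (rsum (fun x : Zd d => g (IZR z) * W x) (box K d) <= g (IZR z) * 2 ^ d). rewrite (rsum_scal W (g (IZR z)) (box K d)).
      apply Rmult_le_compat_l; [left; apply g_pos| exact IHd].
    + unfold rsum in *. 
      assert (E : forall l, List.fold_right Rplus 0 (List.map (fun z => g (IZR z) * 2 ^ d) l)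
                 = List.fold_right Rplus 0 (List.map (fun z => g (IZR z)) l) * 2 ^ d).
      { induction l; simpl; [ring|]. rewrite IHl; ring. }
      rewrite E. pose proof (zrange_sum K). unfold rsum in H.
      pose proof (pow_le 2 d). nra.
Qed.

Lemma fold_Cmod {A} (f : A -> C) l :
  Cmod (List.fold_right Cplus (RtoC 0) (List.map f l)) <= rsum (fun x => Cmod (f x)) l.
Proof.
  induction l; unfold rsum in *; simpl.
  - rewrite Cmod_0. lra.
  - eapply Rle_trans; [apply Cmod_triangle|]. lra.
Qed.

Lemma fold_sub {A} (f h : A -> C) l :
  Cminus (List.fold_right Cplus (RtoC 0) (List.map f l)) (List.fold_right Cplus (RtoC 0) (List.map h l))
  = List.fold_right Cplus (RtoC 0) (List.map (fun x => Cminus (f x) (h x)) l).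
Proof.
  induction l; simpl.
  - ring.
  - rewrite <- IHl. ring.
Qed.

Lemma unif_bound {d} (bs : list (Zd d -> C)) :
  (forall b, List.In b bs -> in_s b) ->
  exists B, 0 < B /\ forall b, List.In b bs -> forall n, Cmod (b n) <= B.
Proof.
  induction bs as [|b0 bs IH]; intros H.
  - exists 1. split; [lra|]. intros b [].
  - destruct IH as [B [HB HB']]. { intros b Hb. apply H. now right. }
    destruct (H b0 (or_introl eq_refl) 0%nat) as [B0 HB0].
    exists (Rmax B B0). split. { apply Rlt_le_trans with B; [lra| apply Rmax_l]. }
    intros b [E|Hb] n.
    + subst. specialize (HB0 n). simpl in HB0. rewrite Rmult_1_l in HB0.
      eapply Rle_trans; [exact HB0| apply Rmax_r].
    + eapply Rle_trans; [apply HB'; auto| apply Rmax_l].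
Qed.

Section Pert.
Variable d : nat.
Variable del : R.
Hypothesis Hdel : 0 < del.

Definition pert (f : Zd d -> C) (n : Zd d) : C :=
  if Rlt_dec (Cmod (f n)) (del * W n) then RtoC (2 * del * W n) else f n.

Lemma pert_diff f n : Cmod (Cminus (pert f n) (f n)) <= 3 * del * W n.
Proof.
  unfold pert. pose proof (W_pos n) as HW. destruct (Rlt_dec _ _) as [H|H].
  - unfold Cminus. eapply Rle_trans; [apply Cmod_triangle|].
    rewrite Cmod_R, Cmod_opp, Rabs_pos_eq by nra. lra.
  - unfold Cminus. rewrite Cplus_opp_r, Cmod_0. nra.
Qed.

Lemma pert_lower f n : del * W n <= Cmod (pert f n).
Proof.
  unfold pert. pose proof (W_pos n) as HW. destruct (Rlt_dec _ _) as [H|H].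
  - rewrite Cmod_R, Rabs_pos_eq by nra. nra.
  - lra.
Qed.

Lemma pert_sprime f : in_sprime f -> in_sprime (pert f).
Proof.
  intros [M [k [HM Hf]]]. exists (M + 2 * del), k. split; [lra|].
  intros n. pose proof (W_pos n). pose proof (W_le1 n).
  pose proof (norm1_nonneg n).
  assert (Hp : 1 <= (1 + IZR (norm1 n)) ^ k) by (apply pow_R1_Rle; lra).
  specialize (Hf n).
  unfold pert. destruct (Rlt_dec _ _) as [H2|H2].
  - rewrite Cmod_R, Rabs_pos_eq by nra. nra.
  - nra.
Qed.

Lemma pert_inv f : in_sprime (fun n => Cinv (pert f n)).
Proof.
  exists (2 ^ d / del), (2 * d)%nat. split.
  { apply Rdiv_lt_0_compat; [apply pow_lt; lra | lra]. }
  intros n. pose proof (W_pos n). pose proof (pert_lower f n).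
  assert (Hnz : pert f n <> RtoC 0).
  { intros E. rewrite E, Cmod_0 in H0. nra. }
  rewrite Cmod_inv by exact Hnz.
  pose proof (W_lower n).
  apply Rle_trans with (/ (del * W n)).
  - apply Rinv_le_contravar; nra.
  - rewrite Rinv_mult. unfold Rdiv.
    apply Rmult_le_reg_r with (W n); [lra|].
    replace (/ del * / W n * W n) with (/ del) by (field; lra).
    replace (2 ^ d * / del * (1 + IZR (norm1 n)) ^ (2 * d) * W n)
      with (/ del * (2 ^ d * (1 + IZR (norm1 n)) ^ (2 * d) * W n)) by ring.
    pose proof (Rinv_0_lt_compat del Hdel). nra.
Qed.

Lemma pert_nz f n : pert f n <> RtoC 0.
Proof.
  pose proof (W_pos n). pose proof (pert_lower f n).
  intros E. rewrite E, Cmod_0 in H0. nra.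
Qed.

Lemma pert_box f b B K :
  (forall n, Cmod (b n) <= B) ->
  Cmod (Cminus (box_sum (pert f) b K) (box_sum f b K)) <= 3 * del * B * 2 ^ d.
Proof.
  intros HB. unfold box_sum. rewrite fold_sub.
  eapply Rle_trans; [apply fold_Cmod|].
  apply Rle_trans with (rsum (fun n => (3 * del * B) * W n) (box K d)).
  - apply rsum_le. intros n.
    replace (Cminus (Cmult (pert f n) (b n)) (Cmult (f n) (b n)))
      with (Cmult (Cminus (pert f n) (f n)) (b n)) by ring.
    rewrite Cmod_mult. pose proof (pert_diff f n). pose proof (HB n).
    pose proof (Cmod_ge_0 (b n)). pose proof (Cmod_ge_0 (Cminus (pert f n) (f n))).
    pose proof (W_pos n). nra.
  - rewrite rsum_scal. pose proof (box_W K d). assert (0 <= B).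
    { pose proof (HB (Vector.const 0%Z d)). pose proof (Cmod_ge_0 (b (Vector.const 0%Z d))). lra. }
    apply Rmult_le_compat_l; [nra|exact H].
Qed.

End Pert.

Theorem theorem1p8 : forall d : nat, (1 <= d)%nat -> is_top_stable_rank d (Some 1%nat).
Proof.
  intros d _. simpl. split; [lia|]. split; [| intros M H1 H2; lia].
  intros a Ha bs eps Hbs Heps.
  destruct (unif_bound bs Hbs) as [B [HB HbB]].
  assert (H2d : 0 < 2 ^ d) by (apply pow_lt; lra).
  set (del := eps / (24 * B * 2 ^ d)).
  assert (Hdel : 0 < del) by (unfold del; apply Rdiv_lt_0_compat; nra).
  assert (Heta : 3 * del * B * 2 ^ d = eps / 8) by (unfold del; field; lra).
  exists (fun i => pert d del (a i)). split.
  - split.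
    + intros i Hi. apply pert_sprime; auto.
    + exists (fun i n => Cinv (pert d del (a i) n)). split.
      * intros i _. apply pert_inv; auto.
      * intros n. simpl. rewrite Cinv_l by (apply pert_nz; auto). ring.
  - intros i b Hi Hb.
    assert (Hbd : forall K, Cmod (Cminus (box_sum (pert d del (a i)) b K) (box_sum (a i) b K)) <= eps / 8).
    { intros K. rewrite <- Heta. apply pert_box; auto. }
    set (x1 := fun K => fst (box_sum (a i) b K)).
    set (y1 := fun K => fst (box_sum (pert d del (a i)) b K) - fst (box_sum (a i) b K)).
    set (x2 := fun K => snd (box_sum (a i) b K)).
    set (y2 := fun K => snd (box_sum (pert d del (a i)) b K) - snd (box_sum (a i) b K)).
    assert (E1 : Lim_seq (fun K => fst (box_sum (pert d del (a i)) b K)) = Lim_seq (fun K => x1 K + y1 K)).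
    { apply Lim_seq_ext. intros K. unfold x1, y1. ring. }
    assert (E2 : Lim_seq (fun K => snd (box_sum (pert d del (a i)) b K)) = Lim_seq (fun K => x2 K + y2 K)).
    { apply Lim_seq_ext. intros K. unfold x2, y2. ring. }
    assert (B1 : forall K, Rabs (y1 K) <= eps / 8).
    { intros K. pose proof (Rmax_Cmod (Cminus (box_sum (pert d del (a i)) b K) (box_sum (a i) b K))) as H.
      specialize (Hbd K). unfold y1. simpl in H.
      eapply Rle_trans; [|exact Hbd]. eapply Rle_trans; [|exact H]. apply Rmax_l. }
    assert (B2 : forall K, Rabs (y2 K) <= eps / 8).
    { intros K. pose proof (Rmax_Cmod (Cminus (box_sum (pert d del (a i)) b K) (box_sum (a i) b K))) as H.
      specialize (Hbd K). unfold y2. simpl in H.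
      eapply Rle_trans; [|exact Hbd]. eapply Rle_trans; [|exact H]. apply Rmax_r. }
    pose proof (Lim_close x1 y1 _ B1) as L1.
    pose proof (Lim_close x2 y2 _ B2) as L2.
    unfold pairing. rewrite E1, E2.
    eapply Rle_lt_trans; [apply Cmod_2Rmax|]. simpl.
    change (fun K => fst (box_sum (a i) b K)) with x1.
    change (fun K => snd (box_sum (a i) b K)) with x2.
    assert (Hs : sqrt 2 < 2).
    { rewrite <- (sqrt_square 2) at 2 by lra. apply sqrt_lt_1; lra. }
    pose proof (sqrt_pos 2).
    assert (Rmax (Rabs (real (Lim_seq (fun K => x1 K + y1 K)) + - real (Lim_seq x1)))
                 (Rabs (real (Lim_seq (fun K => x2 K + y2 K)) + - real (Lim_seq x2))) <= eps / 8).
    { apply Rmax_lub; assumption. }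
    nra.
Qed.
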